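(* Let $\Lambda=(W_j,\Lambda_j,v_j)_{j\in\mathbb{J}}$ be a Parseval g-fusion frame for $H$, let $\mathbb{I}$ be a finite subset of $\mathbb{J}$ and $\mathbb{I}^c=\mathbb{J}\setminus\mathbb{I}$. Then for every $f\in H$, $$\sum_{j\in\mathbb{I}}v_j^2\Vert \Lambda_j \pi_{W_j}f\Vert^2-\Big\Vert \sum_{j\in\mathbb{I}}v_j^2 \pi_{W_j}\Lambda^*_j \Lambda_j \pi_{W_j}f\Big\Vert^2 =\sum_{j\in\mathbb{I}^c}v_j^2\Vert \Lambda_j \pi_{W_j}f\Vert^2-\Big\Vert \sum_{j\in\mathbb{I}^c}v_j^2 \pi_{W_j}\Lambda^*_j \Lambda_j \pi_{W_j}f\Big\Vert^2,$$ and moreover $$\sum_{j\in\mathbb{I}}v_j^2\Vert \Lambda_j \pi_{W_j}f\Vert^2+\Big\Vert \sum_{j\in\mathbb{I}^c}v_j^2 \pi_{W_j}\Lambda^*_j \Lambda_j \pi_{W_j}f\Big\Vert^2\geq \frac{3}{4}\Vert f\Vert^2.$$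
   Context: $H$ is a separable Hilbert space, $\mathbb{J}\subseteq\mathbb{Z}$, $\{H_j\}_{j\in\mathbb{J}}$ are separable Hilbert spaces, $\Lambda_j\in\mathcal{B}(H,H_j)$, $W_j$ are closed subspaces of $H$, $v_j>0$, and $\pi_V$ denotes the orthogonal projection onto a closed subspace $V$. The triple $\Lambda=(W_j,\Lambda_j,v_j)$ is a Parseval g-fusion frame for $H$ if $\sum_{j\in\mathbb{J}}v_j^2\Vert\Lambda_j\pi_{W_j}f\Vert^2=\Vert f\Vert^2$ for all $f\in H$. *)

(* Defs.v *)
From HB Require Import structures.
From mathcomp Require Import all_boot all_order all_algebra.
From mathcomp Require Import all_classical all_reals all_analysis.
Set Implicit Arguments. Unset Strict Implicit. Unset Printing Implicit Defensive.
Import Order.TTheory GRing.Theory Num.Theory.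
Import numFieldNormedType.Exports.
Local Open Scope classical_set_scope.
Local Open Scope ring_scope.

Section Defs.
Variable R : realType.

Definition is_inner_product (V : normedModType R) (ip : V -> V -> R) : Prop :=
  [/\ (forall x y, ip x y = ip y x),
      (forall (a : R) x y z, ip (a *: x + y) z = a * ip x z + ip y z)
    & (forall x, ip x x = `|x| ^+ 2)].

Definition separable (T : topologicalType) : Prop :=
  exists D : set T, countable D /\ closure D = setT.

Definition closed_subspace (V : normedModType R) (W : set V) : Prop :=
  [/\ closed W, W 0 & forall (a : R) x y, W x -> W y -> W (a *: x + y)].

Definition is_orth_proj (V : normedModType R) (ip : V -> V -> R)
  (W : set V) (P : V -> V) : Prop :=
  forall f, W (P f) /\ (forall w, W w -> ip (f - P f) w = 0).

Definition is_adjoint (U V : normedModType R) (ipU : U -> U -> R)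
  (ipV : V -> V -> R) (T : U -> V) (Tstar : V -> U) : Prop :=
  forall x y, ipV (T x) y = ipU x (Tstar y).

(* unconditional sum: the net of finite partial sums over finite subsets
   of A converges to x *)
Definition has_sum (V : normedModType R) (A : set int) (u : int -> V) (x : V)
  : Prop :=
  forall e : R, 0 < e -> exists F0 : set int,
    [/\ finite_set F0, F0 `<=` A &
      forall F : set int, finite_set F -> F0 `<=` F -> F `<=` A ->
        `|x - \sum_(j \in F) u j| < e].
End Defs.

(* Main.v *)
Require Import Defs.
From HB Require Import structures.
From mathcomp Require Import all_boot all_order all_algebra.
From mathcomp Require Import all_classical all_reals all_analysis.
From mathcomp Require Import ring lra.
Import Order.TTheory GRing.Theory Num.Theory.
Import numFieldNormedType.Exports.
Local Open Scope classical_set_scope.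
Local Open Scope ring_scope.
Set Implicit Arguments. Unset Strict Implicit.

Section IP.
Variable R : realType.
Variable V : normedModType R.
Variable ip : V -> V -> R.
Hypothesis hip : is_inner_product ip.

Lemma ip_sym x y : ip x y = ip y x.
Proof. by case: hip. Qed.
Lemma ipxx x : ip x x = `|x| ^+ 2.
Proof. by case: hip. Qed.
Lemma ip_lin a x y z : ip (a *: x + y) z = a * ip x z + ip y z.
Proof. by case: hip. Qed.
Lemma ip0l z : ip 0 z = 0.
Proof.
have := ip_lin 1 0 0 z; rewrite scale1r addr0 mul1r => h.
by move: h => /(congr1 (fun t => t - ip 0 z)); rewrite addrK subrr.
Qed.
Lemma ipDl x y z : ip (x + y) z = ip x z + ip y z.
Proof. by rewrite -[x in LHS]scale1r ip_lin mul1r. Qed.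
Lemma ipZl a x z : ip (a *: x) z = a * ip x z.
Proof. by rewrite -[a *: x]addr0 ip_lin ip0l addr0. Qed.
Lemma ipNl x z : ip (- x) z = - ip x z.
Proof. by rewrite -scaleN1r ipZl mulN1r. Qed.
Lemma ipBl x y z : ip (x - y) z = ip x z - ip y z.
Proof. by rewrite ipDl ipNl. Qed.
Lemma ipDr x y z : ip z (x + y) = ip z x + ip z y.
Proof. by rewrite ip_sym ipDl !(ip_sym _ z). Qed.
Lemma ipZr a x z : ip z (a *: x) = a * ip z x.
Proof. by rewrite ip_sym ipZl ip_sym. Qed.
Lemma ipNr x z : ip z (- x) = - ip z x.
Proof. by rewrite ip_sym ipNl ip_sym. Qed.
Lemma ipBr x y z : ip z (x - y) = ip z x - ip z y.
Proof. by rewrite ipDr ipNr. Qed.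

Lemma ip_suml (I : Type) (r : seq I) (u : I -> V) z :
  ip (\sum_(j <- r) u j) z = \sum_(j <- r) ip (u j) z.
Proof.
elim: r => [|j r IH]; first by rewrite !big_nil ip0l.
by rewrite !big_cons ipDl IH.
Qed.

Lemma normDZ2 x a y :
  `|x + a *: y| ^+ 2 = `|x| ^+ 2 + 2 * a * ip x y + a ^+ 2 * `|y| ^+ 2.
Proof.
rewrite -!ipxx ipDl !ipDr !ipZl !ipZr (ip_sym y x); ring.
Qed.

Lemma normD2 x y : `|x + y| ^+ 2 = `|x| ^+ 2 + 2 * ip x y + `|y| ^+ 2.
Proof. by rewrite -[y in LHS]scale1r normDZ2 mulr1 expr1n mul1r. Qed.
Lemma normB2 x y : `|x - y| ^+ 2 = `|x| ^+ 2 - 2 * ip x y + `|y| ^+ 2.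
Proof. by rewrite -scaleN1r normDZ2 sqrrN expr1n mul1r; ring. Qed.

Lemma ip_le x y : 2 * ip x y <= `|x| ^+ 2 + `|y| ^+ 2.
Proof.
have := sqr_ge0 `|x - y|; rewrite normB2; lra.
Qed.

Lemma polar x y : 4 * ip x y = `|x + y| ^+ 2 - `|x - y| ^+ 2.
Proof. rewrite normD2 normB2; ring. Qed.

Lemma norm_eq0_ip x : ip x x = 0 -> x = 0.
Proof. by rewrite ipxx => /eqP; rewrite sqrf_eq0 normr_eq0 => /eqP. Qed.


Variable W : set V.
Variable P : V -> V.
Hypothesis hW : closed_subspace W.
Hypothesis hP : is_orth_proj ip W P.

Lemma P_sa a b : ip (P a) b = ip a (P b).
Proof.
have e1 : ip (P a) b = ip (P a) (P b).
  have [Wa _] := hP a; have [_ ob] := hP b.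
  have := ob _ Wa; rewrite ipBl => h.
  by rewrite (ip_sym (P a) b) (ip_sym (P a) (P b)); apply/eqP; rewrite -subr_eq0 h.
have e2 : ip a (P b) = ip (P a) (P b).
  have [Wb _] := hP b; have [_ oa] := hP a.
  by have := oa _ Wb; rewrite ipBl => /eqP; rewrite subr_eq0 => /eqP.
by rewrite e1 e2.
Qed.

Lemma P_lin a x y : P (a *: x + y) = a *: P x + P y.
Proof.
case: hW => _ W0 Wl.
set z := a *: x + y.
set d := P z - (a *: P x + P y).
have Wd : W d.
  have W1 : W (a *: P x + P y) by apply: Wl; [case: (hP x)|case: (hP y)].
  have := Wl (-1) _ _ W1 (proj1 (hP z)).
  by rewrite scaleN1r addrC.
have hd : ip d d = 0.
  have e : d = a *: (x - P x) + (y - P y) - (z - P z).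
    rewrite scalerBr addrACA -opprD -/z opprB addrC -addrA.
    by rewrite [z + _]addrC subrK addrC.
  rewrite {1}e ipBl ipDl ipZl (proj2 (hP x) _ Wd) (proj2 (hP y) _ Wd) (proj2 (hP z) _ Wd).
  by rewrite mulr0 !addr0 subrr.
by apply/eqP; rewrite -subr_eq0; apply/eqP; apply: norm_eq0_ip.
Qed.

End IP.
Unset Implicit Arguments. Set Strict Implicit.
Section Main.
Variable R : realType.
Variable H : completeNormedModType R.
Variable ip : H -> H -> R.
Variable J : set int.
Variable Hs : int -> completeNormedModType R.
Variable ips : forall j, Hs j -> Hs j -> R.
Variable L : forall j, {linear H -> Hs j}.
Variable Ls : forall j, Hs j -> H.
Variable W : int -> set H.
Variable P : int -> H -> H.
Variable v : int -> R.
Hypothesis hip : is_inner_product ip.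
Hypothesis hips : forall j, J j -> is_inner_product (ips j).
Hypothesis hadj : forall j, J j -> is_adjoint ip (ips j) (L j) (Ls j).
Hypothesis hWP : forall j, J j -> closed_subspace (W j) /\ is_orth_proj ip (W j) (P j).

Definition a (g : H) j := v j ^+ 2 * `|L j (P j g)| ^+ 2.
Definition T (g : H) j := v j ^+ 2 *: P j (Ls j (L j (P j g))).
Definition b (g h : H) j := v j ^+ 2 * ips j (L j (P j g)) (L j (P j h)).

Hypothesis hpars : forall g, has_sum J (a g) (`|g| ^+ 2).

Lemma K1 j g h : J j -> ip (T g j) h = b g h j.
Proof.
move=> Jj; have [_ hP] := hWP _ Jj.
rewrite /T /b ipZl // (P_sa hip hP) (ip_sym hip) -(hadj _ Jj) (ip_sym (hips _ Jj)).
by [].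
Qed.

Lemma K2 j g : J j -> b g g j = a g j.
Proof. by move=> Jj; rewrite /b /a (ipxx (hips _ Jj)). Qed.

Lemma PD j g h : J j -> P j (g + h) = P j g + P j h.
Proof.
move=> Jj; have [hW hP] := hWP _ Jj.
by rewrite -[g in LHS]scale1r (P_lin hip hW hP) scale1r.
Qed.

Lemma PB j g h : J j -> P j (g - h) = P j g - P j h.
Proof.
move=> Jj; have [hW hP] := hWP _ Jj.
by rewrite addrC -scaleN1r (P_lin hip hW hP) scaleN1r addrC.
Qed.

Lemma K3 j g h : J j -> 4 * b g h j = a (g + h) j - a (g - h) j.
Proof.
move=> Jj; rewrite /b /a (PD _ _ _ Jj) (PB _ _ _ Jj) raddfD raddfB.
by rewrite mulrCA (polar (hips _ Jj)); ring.
Qed.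

Lemma K4 j g h : J j -> 2 * b g h j <= a g j + a h j.
Proof.
move=> Jj; rewrite /b /a mulrCA -mulrDr ler_wpM2l ?sqr_ge0 //.
exact: (ip_le (hips _ Jj)).
Qed.


Lemma L1 g h G : finite_set G -> G `<=` J ->
  ip (\sum_(j \in G) T g j) h = \sum_(j \in G) b g h j.
Proof.
move=> fG GJ; rewrite !fsbig_finite // (ip_suml hip).
apply: eq_big_seq => j; rewrite in_fset_set // in_setE => /GJ Jj; exact: K1.
Qed.

Lemma L2 g G : G `<=` J -> \sum_(j \in G) b g g j = \sum_(j \in G) a g j.
Proof.
move=> GJ; apply: eq_fsbigr => j; rewrite in_setE => /GJ Jj; exact: K2.
Qed.

Lemma L3 g h G : finite_set G -> G `<=` J ->
  4 * \sum_(j \in G) b g h j =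
  \sum_(j \in G) a (g + h) j - \sum_(j \in G) a (g - h) j.
Proof.
move=> fG GJ; rewrite !fsbig_finite // mulr_sumr -sumrB.
apply: eq_big_seq => j; rewrite in_fset_set // in_setE => /GJ Jj; exact: K3.
Qed.

Lemma L4 g h G : finite_set G -> G `<=` J ->
  2 * \sum_(j \in G) b g h j <=
  \sum_(j \in G) a g j + \sum_(j \in G) a h j.
Proof.
move=> fG GJ; rewrite !fsbig_finite // mulr_sumr -big_split /=.
rewrite big_seq [X in _ <= X]big_seq; apply: ler_sum => j.
rewrite in_fset_set // in_setE => /GJ Jj; exact: K4.
Qed.

Lemma a_ge0 g j : 0 <= a g j.
Proof. by rewrite /a mulr_ge0 ?sqr_ge0. Qed.

Lemma Qmono g {A B} : finite_set B -> A `<=` B ->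
  \sum_(j \in A) a g j <= \sum_(j \in B) a g j.
Proof.
move=> fB AB; have fA : finite_set A by apply: sub_finite_set fB.
rewrite -(setDUK AB) fsbigU0 //; last by rewrite setDIK.
  by rewrite lerDl fsumr_ge0 // => j _; exact: a_ge0.
exact: finite_setD.
Qed.

Lemma L5 g G : finite_set G -> G `<=` J -> \sum_(j \in G) a g j <= `|g| ^+ 2.
Proof.
move=> fG GJ; apply/ler_addgt0Pr => e e0.
have [F0 [fF0 F0J hF]] := hpars g e e0.
have fU : finite_set (F0 `|` G) by rewrite finite_setU.
have := hF (F0 `|` G) fU (@subsetUl _ _ _); rewrite subUset => /(_ (conj F0J GJ)).
rewrite ltr_norml => /andP [h1 h2].
have := Qmono g fU (@subsetUr _ F0 G); lra.
Qed.


Lemma M f e F0 : finite_set F0 -> F0 `<=` J ->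
  (forall F, finite_set F -> F0 `<=` F -> F `<=` J ->
     `| `|f| ^+ 2 - \sum_(j \in F) a f j| < e) ->
  forall G, finite_set G -> F0 `<=` G -> G `<=` J ->
  `|f - \sum_(j \in G) T f j| ^+ 2 <= e.
Proof.
move=> fF0 F0J hF0 G fG F0G GJ.
set y := f - _.
apply/ler_addgt0Pr => d d0.
have [F1 [fF1 F1J h1]] := hpars (f + y) d d0.
have [F2 [fF2 F2J h2]] := hpars (f - y) d d0.
pose G' := G `|` (F1 `|` F2).
have fG' : finite_set G' by rewrite /G' !finite_setU.
have G'J : G' `<=` J by rewrite /G' !subUset.
have := h1 G' fG' (fun x Fx => or_intror (or_introl Fx)) G'J.
have := h2 G' fG' (fun x Fx => or_intror (or_intror Fx)) G'J.
rewrite !ltr_norml => /andP [h21 h22] /andP [h11 h12].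
pose Tt := G' `\` G.
have eG' : G' = G `|` Tt by rewrite /Tt setDUK //; exact: subsetUl.
have fT : finite_set Tt by apply: finite_setD.
have TJ : Tt `<=` J by move=> x [/G'J].
have dis : G `&` Tt `<=` set0 by rewrite /Tt setDIK.
have hy : `|y| ^+ 2 = ip f y - \sum_(j \in G) b f y j.
  by rewrite -(ipxx hip) {1}/y (ipBl hip) L1.
have hpol := polar hip f y.
have h3 := L3 f y _ fG' G'J.
have sB : \sum_(j \in G') b f y j = \sum_(j \in G) b f y j + \sum_(j \in Tt) b f y j.
  by rewrite eG' fsbigU0.
have sQ : \sum_(j \in G') a f j = \sum_(j \in G) a f j + \sum_(j \in Tt) a f j.
  by rewrite eG' fsbigU0.
have hQf := L5 f _ fG' G'J.
have := hF0 G fG F0G GJ; rewrite ltr_norml => /andP [hQG1 hQG2].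
have hQy := L5 y _ fT TJ.
have h4 := L4 f y _ fT TJ.
lra.
Qed.


Lemma final (I : set int) : finite_set I -> I `<=` J -> forall f : H,
  exists (s : R) (x : H),
  [/\ has_sum (J `\` I) (a f) s,
      has_sum (J `\` I) (T f) x,
      \sum_(j \in I) a f j - `|\sum_(j \in I) T f j| ^+ 2 = s - `|x| ^+ 2
    & \sum_(j \in I) a f j + `|x| ^+ 2 >= 3 / 4 * `|f| ^+ 2].
Proof.
move=> fI IJ f.
have common : forall F0 F, F0 `<=` J -> finite_set F -> F0 `\` I `<=` F -> F `<=` J `\` I ->
  [/\ I `&` F `<=` set0, finite_set (I `|` F), F0 `<=` I `|` F & I `|` F `<=` J].
  move=> F0 F F0J fF sub FJI; split.
  - by move=> x [Ix /FJI [_ nIx]].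
  - by rewrite finite_setU.
  - move=> x F0x; case: (pselect (I x)) => [Ix|nIx]; [left|right; apply: sub] => //.
  - by rewrite subUset; split => // x /FJI [].
have subD : forall F0, F0 `<=` J -> F0 `\` I `<=` J `\` I by move=> F0 F0J x [/F0J].
set S := \sum_(j \in I) T f j.
have hSf : ip S f = \sum_(j \in I) a f j by rewrite L1 // L2.
exists (`|f| ^+ 2 - \sum_(j \in I) a f j), (f - S); split.
- move=> e e0; have [F0 [fF0 F0J hF]] := hpars f e e0.
  exists (F0 `\` I); split; [exact: finite_setD | exact: subD|].
  move=> F fF sub FJI; have [dis fU F0U UJ] := common F0 F F0J fF sub FJI.
  have := hF _ fU F0U UJ; rewrite fsbigU0 //.
  by rewrite opprD addrA.
- move=> e e0; have e'0 : 0 < e ^+ 2 / 2 by rewrite divr_gt0 // exprn_gt0.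
  have [F0 [fF0 F0J hF]] := hpars f _ e'0.
  exists (F0 `\` I); split; [exact: finite_setD | exact: subD|].
  move=> F fF sub FJI; have [dis fU F0U UJ] := common F0 F F0J fF sub FJI.
  have := M _ _ _ fF0 F0J hF _ fU F0U UJ; rewrite fsbigU0 //.
  rewrite opprD addrA -/S => h.
  have := normr_ge0 (f - S - \sum_(j \in F) T f j); nra.
- rewrite (normB2 hip) (ip_sym hip) hSf; lra.
- have := sqr_ge0 `|S + (- (1/2)) *: f|; rewrite (normDZ2 hip) hSf (normB2 hip) (ip_sym hip) hSf.
  lra.
Qed.

End Main.

Theorem corollary3p1 (R : realType)
  (H : completeNormedModType R) (ip : H -> H -> R)
  (J : set int)
  (Hs : int -> completeNormedModType R) (ips : forall j, Hs j -> Hs j -> R)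
  (L : forall j, {linear H -> Hs j}) (Ls : forall j, Hs j -> H)
  (W : int -> set H) (P : int -> H -> H) (v : int -> R)
  (I : set int) :
  is_inner_product ip -> separable H ->
  (forall j, J j -> is_inner_product (ips j) /\ separable (Hs j)) ->
  (forall j, J j -> continuous (L j)) ->
  (forall j, J j -> is_adjoint ip (ips j) (L j) (Ls j)) ->
  (forall j, J j -> closed_subspace (W j) /\ is_orth_proj ip (W j) (P j)) ->
  (forall j, J j -> 0 < v j) ->
  (* Parseval g-fusion frame *)
  (forall f : H,
     has_sum J (fun j => v j ^+ 2 * `|L j (P j f)| ^+ 2) (`|f| ^+ 2)) ->
  finite_set I -> I `<=` J ->
  forall f : H,
  exists (s : R) (x : H),
  [/\ has_sum (J `\` I) (fun j => v j ^+ 2 * `|L j (P j f)| ^+ 2) s,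
      has_sum (J `\` I) (fun j => v j ^+ 2 *: P j (Ls j (L j (P j f)))) x,
      \sum_(j \in I) v j ^+ 2 * `|L j (P j f)| ^+ 2
        - `|\sum_(j \in I) v j ^+ 2 *: P j (Ls j (L j (P j f)))| ^+ 2
      = s - `|x| ^+ 2
    & \sum_(j \in I) v j ^+ 2 * `|L j (P j f)| ^+ 2 + `|x| ^+ 2
      >= 3 / 4 * `|f| ^+ 2].
Proof.
move=> hip _ hJ _ hadj hWP _ hpars fI IJ f.
apply: (@final R H ip J Hs ips L Ls W P v) => //.
by move=> j Jj; case: (hJ j Jj).
Qed.
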